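(* For all sufficiently large $n$ the following holds for every $1\le k\le n$. Fix a recipient coordinate $i\in[n]$ and vectors $(z_j)_{j\ne i}$ in $V=\mathbb F_2^k$. If the $i$-fibre $\{(z_1,\dots,z_{i-1},u,z_{i+1},\dots,z_n):u\in V\}$ intersects $\mathcal G_{\mathrm{tr}}$, then the kernel $K_i$ on $V$ defined by $K_i\varphi(u)=\frac1{n-1}\sum_{j\ne i}\varphi(u+z_j)$ has spectral gap at least $1/2$ with respect to the uniform measure on $V$.
   Context: $V=\mathbb F_2^k$, $\mathrm{St}(n,k)=\{(z_1,\dots,z_n)\in V^n:\operatorname{span}(z_1,\dots,z_n)=V\}$. For $\xi$ in the dual $V^*$, $\chi_\xi(u)=(-1)^{\xi(u)}$ and $S_\xi(z)=\sum_{i=1}^n\chi_\xi(z_i)$. The good set is $\mathcal G_{\mathrm{tr}}=\{z\in\mathrm{St}(n,k):\max_{0\ne\xi\in V^*}|S_\xi(z)|\le n/4\}$. The spectral gap of a reversible kernel $K$ with stationary law $\rho$ is the largest $\gamma$ with $\gamma\operatorname{Var}_\rho(f)\le\frac12\sum_{x,y}\rho(x)K(x,y)(f(x)-f(y))^2$ for all real $f$. *)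

(* Defs.v *)
From HB Require Import structures.
From mathcomp Require Import all_boot all_order all_algebra.
From mathcomp Require Import classical_sets reals.
Set Implicit Arguments. Unset Strict Implicit. Unset Printing Implicit Defensive.
Import Order.TTheory GRing.Theory Num.Theory.
Local Open Scope ring_scope.

Notation Vk k := 'rV['F_2]_k.

(* Elements of the dual V^* are represented by column vectors xi,
   acting by xi(u) = u *m xi (the standard identification V^* = F_2^k). *)
Definition dual_app (k : nat) (xi : 'cV['F_2]_k) (u : Vk k) : 'F_2 := (u *m xi) 0 0.

(* St(n,k): the tuples (z_1,...,z_n) spanning V, i.e. the n x k matrix with
   rows z_j has full row space. *)
Definition in_St (n k : nat) (z : 'I_n -> Vk k) : bool :=
  row_full (\matrix_(j < n) z j).

Definition chi (R : realType) (k : nat) (xi : 'cV['F_2]_k) (u : Vk k) : R :=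
  if dual_app xi u == 0 then 1 else -1.

Definition S_sum (R : realType) (n k : nat) (xi : 'cV['F_2]_k) (z : 'I_n -> Vk k) : R :=
  \sum_(j < n) chi R xi (z j).

Definition in_Gtr (R : realType) (n k : nat) (z : 'I_n -> Vk k) : Prop :=
  in_St z /\ forall xi : 'cV['F_2]_k, xi != 0 -> `|S_sum R xi z| <= n%:R / 4.

Definition fibre_pt (n k : nat) (z : 'I_n -> Vk k) (i : 'I_n) (u : Vk k) : 'I_n -> Vk k :=
  fun j => if j == i then u else z j.

(* Kernel K_i on V: K_i phi(u) = 1/(n-1) sum_{j<>i} phi(u + z_j), i.e.
   K_i(u,v) = 1/(n-1) #{ j <> i : v = u + z_j }. *)
Definition Ki (R : realType) (n k : nat) (i : 'I_n) (z : 'I_n -> Vk k) (u v : Vk k) : R :=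
  (n.-1)%:R^-1 * \sum_(j < n | j != i) (if v == u + z j then 1 else 0).

Definition variance (R : realType) (T : finType) (rho : T -> R) (f : T -> R) : R :=
  \sum_x rho x * f x ^+ 2 - (\sum_x rho x * f x) ^+ 2.

Definition dirichlet (R : realType) (T : finType) (rho : T -> R) (K : T -> T -> R)
  (f : T -> R) : R :=
  2^-1 * \sum_x \sum_y rho x * K x y * (f x - f y) ^+ 2.

Definition spectral_gap (R : realType) (T : finType) (rho : T -> R) (K : T -> T -> R) : R :=
  sup [set g : R | forall f : T -> R, g * variance rho f <= dirichlet rho K f].

Definition uniform (R : realType) (T : finType) : T -> R := fun _ => (#|T|%:R)^-1.

(* Main.v *)
Require Import Defs.
From HB Require Import structures.
From mathcomp Require Import all_boot all_order all_algebra.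
From mathcomp Require Import classical_sets reals.
From mathcomp Require Import ring lra.
Import Order.TTheory GRing.Theory Num.Theory.
Local Open Scope ring_scope.

Lemma F2_cases (a : 'F_2) : a = 0 \/ a = 1.
Proof. case: a => [[|[|m]] //= Hm]; [left|right]; exact/val_inj. Qed.

Lemma F2_sgn (R : realType) (a b : 'F_2) :
  ((if a + b == 0 then 1 else -1) : R) = (if a == 0 then 1 else -1) * (if b == 0 then 1 else -1).
Proof. by case: (F2_cases a) => ->; case: (F2_cases b) => -> /=; rewrite ?mulr1 ?mul1r ?mulrNN ?mulr1. Qed.

Lemma addvv k (v : 'rV['F_2]_k) : v + v = 0.
Proof. apply/matrixP => i j; rewrite !mxE. case: (F2_cases (v i j)) => ->. - by rewrite addr0. - exact/val_inj. Qed.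

Lemma oppvv k (v : 'rV['F_2]_k) : - v = v.
Proof. by apply/eqP; rewrite eq_sym -subr_eq0 opprK addvv. Qed.

Lemma eq_char2 k (a x y : 'rV['F_2]_k) : (a + x + y == 0) = (y == x + a).
Proof. by rewrite addrC addr_eq0 oppvv addrC. Qed.

Lemma dual_appDl k (xi : 'cV['F_2]_k) u v : dual_app xi (u + v) = dual_app xi u + dual_app xi v.
Proof. by rewrite /dual_app mulmxDl mxE. Qed.

Lemma dual_appDr k (xi xi' : 'cV['F_2]_k) u : dual_app (xi + xi') u = dual_app xi u + dual_app xi' u.
Proof. by rewrite /dual_app mulmxDr mxE. Qed.

Lemma chiDl (R : realType) k (xi : 'cV['F_2]_k) u v : chi R xi (u + v) = chi R xi u * chi R xi v.
Proof. by rewrite /chi dual_appDl F2_sgn. Qed.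

Lemma chiDr (R : realType) k (xi xi' : 'cV['F_2]_k) u : chi R (xi + xi') u = chi R xi u * chi R xi' u.
Proof. by rewrite /chi dual_appDr F2_sgn. Qed.

Lemma chi0v (R : realType) k (u : 'rV['F_2]_k) : chi R 0 u = 1.
Proof. by rewrite /chi /dual_app mulmx0 mxE eqxx. Qed.

Lemma chiv0 (R : realType) k (xi : 'cV['F_2]_k) : chi R xi 0 = 1.
Proof. by rewrite /chi /dual_app mul0mx mxE eqxx. Qed.

Lemma chi_bound (R : realType) k (xi : 'cV['F_2]_k) u : -1 <= chi R xi u <= 1.
Proof. rewrite /chi; case: ifP => _; lra. Qed.

Lemma sum_chi (R : realType) k (w : 'rV['F_2]_k) :
  \sum_(xi : 'cV['F_2]_k) chi R xi w = if w == 0 then #|{: 'cV['F_2]_k}|%:R else 0.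
Proof.
case: eqP => [->|/eqP wn0].
  by rewrite (eq_bigr (fun _ => 1)) ?sumr_const // => xi _; rewrite chiv0.
have [j Hj] : exists j, w 0 j != 0.
  apply/existsP; apply: contraR wn0 => /existsPn H; apply/eqP/matrixP => a b.
  by rewrite ord1 mxE; move/negPn: (H b) => /eqP.
have H1 : chi R (delta_mx j 0) w = -1.
  rewrite /chi /dual_app -colE mxE.
  by case: (F2_cases (w 0 j)) Hj => ->.
set S := \sum_xi _.
have : S = - S.
  rewrite {1}/S (reindex_inj (addIr (delta_mx j 0))) /=.
  rewrite -mulN1r mulr_sumr; apply eq_bigr => xi _; by rewrite chiDr H1 mulrN1 mulN1r.
move=> HS; lra.
Qed.

Definition fh (R : realType) k (f : 'rV['F_2]_k -> R) (xi : 'cV['F_2]_k) : R :=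
  \sum_x f x * chi R xi x.
Arguments fh {R k}.

Lemma parseval (R : realType) k (f : 'rV['F_2]_k -> R) (a : 'rV['F_2]_k) :
  \sum_xi chi R xi a * fh f xi ^+ 2 = #|{: 'cV['F_2]_k}|%:R * \sum_x f x * f (x + a).
Proof.
rewrite (eq_bigr (fun xi => \sum_x \sum_y f x * f y * chi R xi (a + x + y))); last first.
  move=> xi _; rewrite /fh expr2 mulrA [chi R xi a * _]mulr_sumr mulr_suml; apply eq_bigr => x _.
  rewrite mulr_sumr; apply eq_bigr => y _; rewrite !chiDl; ring.
rewrite exchange_big /= mulr_sumr; apply eq_bigr => x _.
rewrite exchange_big /=.
rewrite (eq_bigr (fun y => f x * f y * (\sum_xi chi R xi (a + x + y)))); last first.
  by move=> y _; rewrite mulr_sumr.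
rewrite (bigD1 (x + a)) //= [X in _ + X]big1 ?addr0.
  rewrite sum_chi eq_char2 eqxx; ring.
by move=> y Hy; rewrite sum_chi eq_char2 (negbTE Hy) mulr0.
Qed.

Arguments parseval {R k}.
Lemma sum_shift (R : realType) k (F : 'rV['F_2]_k -> R) a : \sum_x F (x + a) = \sum_x F x.
Proof. by rewrite [RHS](reindex_inj (addIr a)). Qed.
Arguments sum_shift {R k}.

Lemma sum_ind (R : realType) (T : finType) (b : T) (h : T -> R) :
  \sum_y (if y == b then 1 else 0) * h y = h b.
Proof.
rewrite (bigD1 b) //= eqxx mul1r [X in _ + X]big1 ?addr0 // => y /negbTE ->; exact: mul0r.
Qed.

Lemma Ki_sum (R : realType) n k (i : 'I_n) (z : 'I_n -> 'rV['F_2]_k) x (h : 'rV['F_2]_k -> R) :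
  \sum_y Ki R i z x y * h y = (n.-1)%:R^-1 * \sum_(j < n | j != i) h (x + z j).
Proof.
rewrite /Ki (eq_bigr (fun y => (n.-1)%:R^-1 * \sum_(j < n | j != i) ((if y == x + z j then 1 else 0) * h y))); last first.
  by move=> y _; rewrite -mulrA mulr_suml.
rewrite -mulr_sumr exchange_big /=; congr (_ * _); apply eq_bigr => j _; exact: sum_ind.
Qed.

Lemma cnt_ne (R : realType) n (i : 'I_n) (a : R) :
  \sum_(j < n | j != i) a = (n.-1)%:R * a.
Proof.
rewrite -[in LHS](mul1r a) -mulr_suml; congr (_ * _).
have H : \sum_(j < n) (1 : R) = n%:R by rewrite sumr_const card_ord.
rewrite (bigD1 i) //= in H.
have Hn : (0 < n)%N by apply: leq_ltn_trans (leq0n i) (ltn_ord i).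
have En : n%:R = (n.-1)%:R + 1 :> R by rewrite natr1 prednK.
move: H; rewrite En => H; lra.
Qed.

Lemma sq_shift (R : realType) k (f : 'rV['F_2]_k -> R) a :
  \sum_x (f x - f (x + a)) ^+ 2 = 2 * \sum_x f x ^+ 2 - 2 * \sum_x f x * f (x + a).
Proof.
rewrite (eq_bigr (fun x => (f x ^+ 2 + f (x + a) ^+ 2) - 2 * (f x * f (x + a)))); last first.
  by move=> x _; ring.
rewrite sumrB big_split /= (sum_shift (fun x => f x ^+ 2)) -mulr_sumr; ring.
Qed.

Lemma T_bound (R : realType) k (T g : 'cV['F_2]_k -> R) (d : R) :
  T 0 = d -> (forall xi, xi != 0 -> T xi <= d / 2) -> (forall xi, 0 <= g xi) -> 0 <= d ->
  \sum_xi T xi * g xi <= d / 2 * (g 0 + \sum_xi g xi).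
Proof.
move=> T0 Tb g0 d0.
rewrite (bigD1 0) //= [X in _ <= _ * (_ + X)](bigD1 0) //= T0.
have : \sum_(xi | xi != 0) T xi * g xi <= \sum_(xi | xi != 0) d / 2 * g xi.
  apply: ler_sum => xi Hxi; apply: ler_wpM2r; [exact: g0| exact: Tb].
rewrite -mulr_sumr => H.
have := g0 0; lra.
Qed.

Lemma S_fibre (R : realType) n k (i : 'I_n) (z : 'I_n -> 'rV['F_2]_k) u xi :
  S_sum R xi (fibre_pt z i u) = chi R xi u + \sum_(j < n | j != i) chi R xi (z j).
Proof.
rewrite /S_sum (bigD1 i) //= /fibre_pt eqxx; congr (_ + _); apply eq_bigr => j /negbTE ->. done.
Qed.

Lemma main_ineq {R : realType} {n k} {i : 'I_n} {z : 'I_n -> 'rV['F_2]_k} {u} :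
  (6 <= n)%N -> (forall xi : 'cV['F_2]_k, xi != 0 -> `|S_sum R xi (fibre_pt z i u)| <= n%:R / 4) ->
  forall f, 2^-1 * variance (@uniform R _ : 'rV['F_2]_k -> R) f <= dirichlet (@uniform R _ : 'rV['F_2]_k -> R) (Ki R i z) f.
Proof.
move=> Hn Hg f.
set N : R := #|{: 'rV['F_2]_k}|%:R.
have NM : #|{: 'cV['F_2]_k}| = #|{: 'rV['F_2]_k}| by rewrite !card_mx mul1n muln1.
have N0 : 0 < N by rewrite ltr0n card_mx card_Fp // expn_gt0.
set Q := \sum_x f x ^+ 2.
set S := \sum_x f x.
set L := \sum_(j < n | j != i) \sum_x f x * f (x + z j).
set d : R := (n.-1)%:R.
have Hd : 5 <= d.
  have : (5 <= n.-1)%N by rewrite -ltnS prednK // (leq_trans _ Hn).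
  by rewrite /d -(ler_nat R).
have Hdir : dirichlet (@uniform R _ : 'rV['F_2]_k -> R) (Ki R i z) f
     = 2^-1 * (N^-1 * (d^-1 * (2 * (d * Q) - 2 * L))).
  rewrite /dirichlet /uniform; congr (_ * _).
  rewrite (eq_bigr (fun x => N^-1 * \sum_y Ki R i z x y * (f x - f y) ^+ 2)); last first.
    move=> x _; rewrite mulr_sumr; apply eq_bigr => y _; rewrite -mulrA. reflexivity.
  rewrite -mulr_sumr; congr (_ * _).
  rewrite (eq_bigr (fun x => d^-1 * \sum_(j < n | j != i) (f x - f (x + z j)) ^+ 2)); last first.
    by move=> x _; rewrite Ki_sum.
  rewrite -mulr_sumr exchange_big /=; congr (_ * _).
  rewrite (eq_bigr (fun j => 2 * Q - 2 * \sum_x f x * f (x + z j))); last first.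
    by move=> j _; rewrite sq_shift.
  by rewrite sumrB -!mulr_sumr cnt_ne.
have Hvar : variance (@uniform R _ : 'rV['F_2]_k -> R) f = N^-1 * Q - (N^-1 * S) ^+ 2.
  by rewrite /variance /uniform -!mulr_sumr.
set T := fun xi : 'cV['F_2]_k => \sum_(j < n | j != i) chi R xi (z j).
have HNL : N * L = \sum_xi T xi * fh f xi ^+ 2.
  rewrite /L mulr_sumr.
  rewrite (eq_bigr (fun j => \sum_xi chi R xi (z j) * fh f xi ^+ 2)); last first.
    by move=> j _; rewrite parseval NM.
  rewrite exchange_big /=; apply eq_bigr => xi _; by rewrite mulr_suml.
have HP : \sum_xi fh f xi ^+ 2 = N * Q.
  have := parseval f 0; rewrite NM -/N.
  rewrite (eq_bigr (fun xi => fh f xi ^+ 2)); last by move=> xi _; rewrite chiv0 mul1r.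
  by move=> ->; rewrite /Q; congr (_ * _); apply eq_bigr => x _; rewrite addr0 expr2.
have Hfh0 : fh f 0 = S by rewrite /fh /S; apply eq_bigr => x _; rewrite chi0v mulr1.
have Hb : \sum_xi T xi * fh f xi ^+ 2 <= d / 2 * (fh f 0 ^+ 2 + \sum_xi fh f xi ^+ 2).
  apply: T_bound.
  - by rewrite /T (eq_bigr (fun _ => 1)) ?cnt_ne ?mulr1 // => j _; rewrite chi0v.
  - move=> xi Hxi; have := Hg xi Hxi; rewrite S_fibre => H.
    have H1 := le_trans (ler_norm _) H.
    have := chi_bound R _ xi u.
    have En : n%:R = d + 1 :> R by rewrite /d natr1 prednK // (leq_trans _ Hn).
    rewrite En in H1; rewrite /T; move=> /andP [] *; lra.
  - by move=> xi; apply: sqr_ge0.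
  - lra.
rewrite Hfh0 HP -HNL in Hb.
set Ni := N^-1.
have ENi : Ni * N = 1 by rewrite mulVf // gt_eqF.
have Ni0 : 0 <= Ni by rewrite invr_ge0 ltW.
have L1 : L <= d / 2 * (S ^+ 2 * Ni + Q).
  have -> : L = Ni * (N * L) by rewrite mulrA ENi mul1r.
  have -> : d / 2 * (S ^+ 2 * Ni + Q) = Ni * (d / 2 * (S ^+ 2 + N * Q)).
    rewrite -[in LHS](mul1r Q) -ENi; ring.
  exact: ler_wpM2l.
set di := d^-1.
have Edi : di * d = 1 by rewrite mulVf // gt_eqF //; lra.
have di0 : 0 <= di by rewrite invr_ge0; lra.
have L2 : di * L <= (S ^+ 2 * Ni + Q) / 2.
  have -> : (S ^+ 2 * Ni + Q) / 2 = di * (d / 2 * (S ^+ 2 * Ni + Q)).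
    rewrite -[in LHS](mul1r (_ / 2)) -Edi; ring.
  exact: ler_wpM2l.
have L3 : Q - S ^+ 2 * Ni <= di * (2 * (d * Q) - 2 * L).
  have -> : di * (2 * (d * Q) - 2 * L) = 2 * (di * d) * Q - 2 * (di * L) by ring.
  rewrite Edi; lra.
have L4 := ler_wpM2l Ni0 L3.
rewrite Hdir Hvar.
have -> : Ni * Q - (Ni * S) ^+ 2 = Ni * (Q - S ^+ 2 * Ni) by ring.
apply: ler_wpM2l; first by rewrite invr_ge0; lra.
exact: L4.
Qed.

Theorem proposition3p4 :
  exists N : nat, forall (R : realType) (n : nat), (N <= n)%N ->
  forall k : nat, (1 <= k <= n)%N ->
  forall (i : 'I_n) (z : 'I_n -> 'rV['F_2]_k),
    (exists u : 'rV['F_2]_k, in_Gtr R (fibre_pt z i u)) ->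
    2^-1 <= spectral_gap (@uniform R _ : 'rV['F_2]_k -> R) (Ki R i z).
Proof.
exists 6%N => R n Hn k /andP [Hk _] i z [u [_ Hg]].
have Hmain := main_ineq Hn Hg.
rewrite /spectral_gap; apply: sup_upper_bound; last by move=> f; exact: Hmain.
split; first by exists 2^-1 => f; exact: Hmain.
set rho := (@uniform R _ : 'rV['F_2]_k -> R).
set f0 : 'rV['F_2]_k -> R := fun x => if x == 0 then 1 else 0.
set Ni : R := #|{: 'rV['F_2]_k}|%:R^-1.
have N2 : (2 : R) <= #|{: 'rV['F_2]_k}|%:R.
  rewrite card_mx card_Fp // mul1n (ler_nat R 2).
  by rewrite -[X in (X <= _)%N](expn1 2) leq_pexp2l.
have Ni0 : 0 < Ni by rewrite invr_gt0; lra.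
have Ni1 : Ni < 1 by rewrite invf_lt1; lra.
have Hv : variance rho f0 = Ni - Ni ^+ 2.
  rewrite /variance /rho /uniform.
  rewrite (bigD1 0) //= [X in _ + X - _]big1 ?addr0; last first.
    by move=> x /negbTE Hx; rewrite /f0 Hx expr0n mulr0.
  rewrite (bigD1 0) //= [X in _ - (_ + X) ^+ 2]big1 ?addr0; last first.
    by move=> x /negbTE Hx; rewrite /f0 Hx mulr0.
  by rewrite /f0 eqxx expr1n !mulr1.
have v0 : 0 < variance rho f0 by rewrite Hv; nra.
exists (dirichlet rho (Ki R i z) f0 / variance rho f0) => g Hgf.
rewrite ler_pdivlMr //; exact: Hgf.
Qed.
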